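(* Let $K$ be a field of characteristic zero and $n\ge1$, and regard $\mathbb{S}_n\subseteq{\rm End}_K(P_n)$. Then (1) $1+F_n\subseteq\mathcal{C}(P_n)_0$, and (2) $\mathbb{S}_n^*+F_n\subseteq\mathcal{C}(P_n)_0$.
   Context: $\mathbb{S}_n$ is the $K$-algebra generated by $x_1,\dots,x_n,y_1,\dots,y_n$ with defining relations $y_ix_i=1$ and $[x_i,y_j]=[x_i,x_j]=[y_i,y_j]=0$ for $i\ne j$; it acts faithfully on $P_n=K[x_1,\dots,x_n]$ by $x_i*x^\alpha=x^{\alpha+e_i}$, $y_i*x^\alpha=x^{\alpha-e_i}$ if $\alpha_i>0$ and $0$ otherwise. $F_n$ is the ideal of $\mathbb{S}_n$ spanned by all $\prod_{i=1}^n(x_i^{\alpha_i}y_i^{\beta_i}-x_i^{\alpha_i+1}y_i^{\beta_i+1})$, $\alpha,\beta\in\mathbb{N}^n$. $\mathbb{S}_n^*$ is the group of units of $\mathbb{S}_n$. $\mathcal{C}(P_n)_0$ is the set of $K$-linear maps $\varphi:P_n\to P_n$ with finite-dimensional kernel and cokernel and index ${\rm ind}(\varphi)=\dim\ker\varphi-\dim{\rm coker}\,\varphi=0$. *)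

(* Defs.v *)
From HB Require Import structures.
From mathcomp Require Import all_boot all_order all_algebra.
From mathcomp Require Import mpoly.
Set Implicit Arguments. Unset Strict Implicit. Unset Printing Implicit Defensive.
Import GRing.Theory.
Local Open Scope ring_scope.

Section Jacobson.
Variables (K : fieldType) (n : nat).

Definition Pn := {mpoly K[n]}.

Definition opX (i : 'I_n) (p : Pn) : Pn := 'X_i * p.
Definition opY (i : 'I_n) (p : Pn) : Pn :=
  \sum_(m <- msupp p | (0 < m i)%N) p@_m *: 'X_[(m - U_(i))%MM].

(* S_n, regarded inside End_K(P_n): the (unital) K-subalgebra generated by
   the operators x_i, y_i.  (The action is faithful, so this is S_n.) *)
Inductive Sn : (Pn -> Pn) -> Prop :=
| Sn_id : Sn id
| Sn_X i : Sn (opX i)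
| Sn_Y i : Sn (opY i)
| Sn_add f g : Sn f -> Sn g -> Sn (fun p => f p + g p)
| Sn_scale (a : K) f : Sn f -> Sn (fun p => a *: f p)
| Sn_comp f g : Sn f -> Sn g -> Sn (f \o g)
| Sn_ext f g : Sn f -> f =1 g -> Sn g.

Definition Sn_unit (u : Pn -> Pn) : Prop :=
  Sn u /\ exists v, Sn v /\ (forall p, u (v p) = p) /\ (forall p, v (u p) = p).

Definition Fterm (i : 'I_n) (a b : nat) (p : Pn) : Pn :=
  iter a (opX i) (iter b (opY i) p)
  - iter a.+1 (opX i) (iter b.+1 (opY i) p).

Definition Fgen (al be : 'I_n -> nat) : Pn -> Pn :=
  foldr (fun i f => Fterm i (al i) (be i) \o f) id (enum 'I_n).

Definition Fn (f : Pn -> Pn) : Prop :=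
  exists s : seq (K * ('I_n -> nat) * ('I_n -> nat)),
    forall p, f p = \sum_(t <- s) t.1.1 *: Fgen t.1.2 t.2 p.

(* s is a basis of U modulo the subspace W (i.e. its image is a basis of U/W) *)
Definition basis_mod (W U : Pn -> Prop) (s : seq Pn) : Prop :=
  [/\ forall v, v \in s -> U v,
      forall c : seq K, W (\sum_(i < size s) c`_i *: s`_i) ->
        forall i, (i < size s)%N -> c`_i = 0
    & forall v, U v -> exists (c : seq K) (w : Pn),
        W w /\ v = w + \sum_(i < size s) c`_i *: s`_i].

Definition dim_mod (W U : Pn -> Prop) (d : nat) : Prop :=
  exists s, size s = d /\ basis_mod W U s.

Definition lin_map (phi : Pn -> Pn) : Prop :=
  forall (a : K) (u v : Pn), phi (a *: u + v) = a *: phi u + phi v.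

(* C(P_n)_0 : K-linear maps with finite-dimensional kernel and cokernel and
   index dim ker - dim coker = 0 *)
Definition C0 (phi : Pn -> Pn) : Prop :=
  lin_map phi /\
  exists d : nat,
    dim_mod (fun v => v = 0) (fun v => phi v = 0) d /\
    dim_mod (fun v => exists q, v = phi q) (fun _ => True) d.

End Jacobson.

(* Main.v *)
Require Import Defs.
From HB Require Import structures.
From mathcomp Require Import all_boot all_order all_algebra.
From mathcomp Require Import mpoly zify.
Set Implicit Arguments. Unset Strict Implicit. Unset Printing Implicit Defensive.
Import GRing.Theory.
Local Open Scope ring_scope.

Section S1.
Variables (K : fieldType) (n : nat).
Local Notation Pn := (Pn K n).
Implicit Types (p q : Pn) (m : 'X_{1..n}) (f : Pn -> Pn).

Lemma sum_msupp_ext (G : 'X_{1..n} -> Pn) p (r : seq 'X_{1..n}) :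
  uniq r -> {subset msupp p <= r} ->
  \sum_(m <- msupp p) p@_m *: G m = \sum_(m <- r) p@_m *: G m.
Proof.
move=> ur sub; rewrite [RHS](bigID (fun m => m \in msupp p)) /=.
rewrite [X in _ = _ + X]big1 ?addr0; last first.
  by move=> m /memN_msupp_eq0 ->; rewrite scale0r.
rewrite -[in RHS]big_filter; apply: perm_big; apply: uniq_perm.
- exact: msupp_uniq.
- exact: filter_uniq.
move=> m; rewrite mem_filter; case: (boolP (m \in msupp p)) => //= /sub ->.
by [].
Qed.

Lemma sum_msupp_lin (G : 'X_{1..n} -> Pn) :
  lin_map (fun p => \sum_(m <- msupp p) p@_m *: G m).
Proof.
move=> a u v /=.
set r := undup (msupp u ++ msupp v ++ msupp (a *: u + v)).
have ur : uniq r by exact: undup_uniq.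
rewrite !(@sum_msupp_ext G _ r) //; try by move=> m Hm; rewrite mem_undup !mem_cat Hm ?orbT.
rewrite scaler_sumr -big_split /=; apply: eq_bigr => m _.
by rewrite mcoeffD mcoeffZ scalerDl scalerA.
Qed.

Lemma lin0 f : lin_map f -> f 0 = 0.
Proof.
move=> H; have := H 1 0 0; rewrite !scale1r !addr0 => E.
have : f 0 - f 0 = f 0 + f 0 - f 0 by rewrite -E.
by rewrite subrr addrK.
Qed.

Lemma linD f : lin_map f -> forall u v, f (u + v) = f u + f v.
Proof. by move=> H u v; have := H 1 u v; rewrite !scale1r. Qed.

Lemma linZ f : lin_map f -> forall a u, f (a *: u) = a *: f u.
Proof. by move=> H a u; rewrite -[a *: u]addr0 H lin0 // addr0. Qed.

Lemma linN f : lin_map f -> forall u, f (- u) = - f u.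
Proof. by move=> H u; rewrite -scaleN1r linZ // scaleN1r. Qed.

Lemma linB f : lin_map f -> forall u v, f (u - v) = f u - f v.
Proof. by move=> H u v; rewrite linD // linN. Qed.

Lemma lin_sum f (I : Type) (r : seq I) (P : pred I) (F : I -> Pn) :
  lin_map f -> f (\sum_(i <- r | P i) F i) = \sum_(i <- r | P i) f (F i).
Proof.
move=> H; elim/big_rec2: _ => [|i y1 y2 _ <-]; first exact: lin0.
exact: linD.
Qed.

Lemma lin_opX (i : 'I_n) : lin_map (opX (K:=K) i).
Proof. by move=> a u v; rewrite /opX mulrDr scalerAr. Qed.

Lemma lin_opY (i : 'I_n) : lin_map (opY (K:=K) i).
Proof.
rewrite /opY => a u v.
have E p : \sum_(m <- msupp p | (0 < m i)%N) p@_m *: 'X_[(m - U_(i))%MM]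
   = \sum_(m <- msupp p) p@_m *: (if (0 < m i)%N then 'X_[(m - U_(i))%MM] else 0).
  by rewrite big_mkcond; apply: eq_bigr => m _; case: ifP; rewrite ?scaler0.
by rewrite !E sum_msupp_lin.
Qed.

Definition setm m (i : 'I_n) (v : nat) : 'X_{1..n} :=
  [multinom (if j == i then v else m j) | j < n].

Lemma setmE m i v j : setm m i v j = if j == i then v else m j.
Proof. exact: mnmE. Qed.

Lemma setm_id m i v w : setm (setm m i v) i w = setm m i w.
Proof. by apply/mnmP => j; rewrite !setmE; case: eqP. Qed.

Lemma opYX i m : opY i ('X_[m] : Pn) = if (0 < m i)%N then 'X_[setm m i (m i).-1] else 0.
Proof.
rewrite /opY msuppX big_mkcond big_seq1 mcoeffX eqxx scale1r.
case: ifP => // h; congr 'X_[_]; apply/mnmP => j.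
rewrite mnmBE mnm1E setmE; case: (eqVneq j i) => [->|/negbTE ne].
  rewrite ?eqxx /=; lia.
by rewrite ?(eq_sym i j) ?ne ?subn0 ?addn0.
Qed.

Lemma opXX i m : opX i ('X_[m] : Pn) = 'X_[setm m i (m i).+1].
Proof.
rewrite /opX -mpolyXD; congr 'X_[_]; apply/mnmP => j.
rewrite mnmDE mnm1E setmE; case: (eqVneq j i) => [->|/negbTE ne].
  by rewrite add1n.
by rewrite ?(eq_sym i j) ?ne ?add0n.
Qed.

Lemma iterXX i a m : iter a (opX i) ('X_[m] : Pn) = 'X_[setm m i (m i + a)].
Proof.
elim: a => [|a IH] /=.
  by congr 'X_[_]; apply/mnmP => j; rewrite setmE addn0; case: eqP => [->|].
by rewrite IH opXX setm_id setmE eqxx addnS.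
Qed.

Lemma iterYX i b m : iter b (opY i) ('X_[m] : Pn) =
  if (b <= m i)%N then 'X_[setm m i (m i - b)] else 0.
Proof.
elim: b => [|b IH] /=.
  by congr 'X_[_]; apply/mnmP => j; rewrite setmE subn0; case: eqP => [->|].
rewrite IH; case: (leqP b (m i)) => hb.
  rewrite opYX setm_id setmE eqxx; case: (leqP b.+1 (m i)) => h2.
    by rewrite ifT; [congr 'X_[setm _ _ _]; lia | lia].
  by rewrite ifF //; lia.
rewrite ifF; last by lia.
exact: lin0 (lin_opY i).
Qed.

Lemma iter_opX0 i a : iter a (opX i) (0 : Pn) = 0.
Proof. by elim: a => //= a ->; exact: lin0 (lin_opX i). Qed.

Lemma FtermX i a b m :
  Fterm i a b ('X_[m] : Pn) = if m i == b then 'X_[setm m i a] else 0.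
Proof.
rewrite /Fterm !iterYX.
case: (ltngtP (m i) b) => h.
- by rewrite !iter_opX0 subr0.
- rewrite !iterXX !setm_id !setmE !eqxx.
  have -> : (m i - b.+1 + a.+1 = m i - b + a)%N by lia.
  by rewrite subrr.
- by rewrite iter_opX0 subr0 iterXX setm_id setmE eqxx h subnn add0n.
Qed.


Lemma lin_comp f g : lin_map f -> lin_map g -> lin_map (f \o g).
Proof. by move=> Hf Hg a u v /=; rewrite Hg Hf. Qed.

Lemma lin_iter f k : lin_map f -> lin_map (iter k f).
Proof. by move=> H; elim: k => [|k IH] a u v //=; rewrite IH H. Qed.

Lemma lin_Fterm i a b : lin_map (@Fterm K n i a b).
Proof.
move=> c u v; rewrite /Fterm.
rewrite !(lin_iter _ (lin_opY i)) !(lin_iter _ (lin_opX i)).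
rewrite scalerBr; set A := iter a _ _; set B := iter a.+1 _ _; set C := iter a _ _; set D := iter a.+1 _ _.
by rewrite opprD addrACA.
Qed.

Lemma lin_foldr al be (l : seq 'I_n) :
  lin_map (foldr (fun i f => @Fterm K n i (al i) (be i) \o f) id l).
Proof.
elim: l => [|i l IH] /=; first by [].
exact: lin_comp (lin_Fterm _ _ _) IH.
Qed.

Definition upd (al : 'I_n -> nat) (l : seq 'I_n) m : 'X_{1..n} :=
  [multinom (if j \in l then al j else m j) | j < n].

Lemma foldrX al be (l : seq 'I_n) m : uniq l ->
  foldr (fun i f => Fterm i (al i) (be i) \o f) id l ('X_[m] : Pn) =
  if all (fun i => m i == be i) l then 'X_[upd al l m] else 0.
Proof.
elim: l => [|i l IH] /=.
  by move=> _; congr 'X_[_]; apply/mnmP => j; rewrite mnmE.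
case/andP => il ul; rewrite IH //.
case: (boolP (all _ l)) => hl; last first.
  by rewrite andbF; exact: lin0 (lin_Fterm _ _ _).
rewrite andbT FtermX mnmE (negbTE il).
case: (m i == be i) => //; congr 'X_[_]; apply/mnmP => j.
rewrite setmE !mnmE in_cons; case: (eqVneq j i) => [->|] //=.
Qed.

Definition mk (f : 'I_n -> nat) : 'X_{1..n} := [multinom f j | j < n].

Lemma FgenX al be m :
  Fgen al be ('X_[m] : Pn) = if m == mk be then 'X_[mk al] else 0.
Proof.
rewrite /Fgen foldrX ?enum_uniq //.
have -> : all (fun i => m i == be i) (enum 'I_n) = (m == mk be).
  apply/allP/eqP => [H|->].
    by apply/mnmP => j; rewrite mnmE; apply/eqP/H; rewrite mem_enum.
  by move=> j _; rewrite mnmE.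
case: ifP => // _; congr 'X_[_]; apply/mnmP => j.
by rewrite !mnmE mem_enum.
Qed.

Lemma FgenE al be p : Fgen al be p = p@_(mk be) *: 'X_[mk al].
Proof.
rewrite {1}[p]mpolyE /Fgen lin_sum; last exact: lin_foldr.
under eq_bigr => m _ do rewrite (linZ (lin_foldr al be (enum 'I_n))) -/(Fgen al be _) FgenX.
case: (boolP (mk be \in msupp p)) => hb.
  rewrite (big_rem _ hb) /= eqxx big1_seq ?addr0 // => m /andP [_ hm].
  have : m != mk be.
    by apply: contraTneq hm => ->; rewrite mem_rem_uniq ?msupp_uniq // inE eqxx.
  by move/negbTE ->; rewrite scaler0.
rewrite memN_msupp_eq0 // scale0r big1_seq // => m /andP [_ hm].
have : m != mk be by apply: contraNneq hb => <-.
by move/negbTE ->; rewrite scaler0.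
Qed.

End S1.

Section S2.
Variables (K : fieldType) (n : nat).
Local Notation Pn := (Pn K n).
Implicit Types (p q : Pn) (m : 'X_{1..n}) (f : Pn -> Pn).

Variable M : seq 'X_{1..n}.
Hypothesis uM : uniq M.
Local Notation k := (size M).
Definition Mj (j : 'I_k) : 'X_{1..n} := nth 0%MM M j.

Definition cV p : 'rV[K]_k := \row_j p@_(Mj j).
Definition emb (r : 'rV[K]_k) : Pn := \sum_(j < k) r 0 j *: 'X_[Mj j].

Lemma embE r m : (emb r)@_m = \sum_(j < k) r 0 j * (Mj j == m)%:R.
Proof.
rewrite /emb raddf_sum /=; apply: eq_bigr => j _.
by rewrite mcoeffZ mcoeffX.
Qed.

Lemma Mj_inj : injective Mj.
Proof.
move=> i j /eqP; rewrite /Mj nth_uniq // => /eqP h; exact: val_inj.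
Qed.

Lemma cV_emb r : cV (emb r) = r.
Proof.
apply/rowP => j; rewrite mxE embE (bigD1 j) //= eqxx mulr1 big1 ?addr0 //.
move=> i ij; case: (eqVneq (Mj i) (Mj j)) => [/Mj_inj e|_]; last by rewrite mulr0.
by rewrite e eqxx in ij.
Qed.

Lemma emb_out r m : m \notin M -> (emb r)@_m = 0.
Proof.
move=> hm; rewrite embE big1 // => j _.
case: (eqVneq (Mj j) m) => [e|_]; last by rewrite mulr0.
by move: hm; rewrite -e /Mj mem_nth.
Qed.

Lemma embD r s : emb (r + s) = emb r + emb s.
Proof.
by rewrite /emb -big_split; apply: eq_bigr => j _; rewrite mxE scalerDl.
Qed.

Lemma emb0 : emb 0 = 0.
Proof. by rewrite /emb big1 // => j _; rewrite mxE scale0r. Qed.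

Lemma embZ a r : emb (a *: r) = a *: emb r.
Proof.
by rewrite /emb scaler_sumr; apply: eq_bigr => j _; rewrite mxE scalerA.
Qed.

Lemma emb_sum (I : Type) (r : seq I) (P : pred I) (F : I -> 'rV[K]_k) :
  emb (\sum_(i <- r | P i) F i) = \sum_(i <- r | P i) emb (F i).
Proof.
elim/big_rec2: _ => [|i y1 y2 _ <-]; first exact: emb0.
exact: embD.
Qed.

Lemma cVD p q : cV (p + q) = cV p + cV q.
Proof. by apply/rowP => j; rewrite !mxE mcoeffD. Qed.

Lemma in_M m : m \in M -> exists j, m = Mj j.
Proof.
move=> hm; have hi : (index m M < k)%N by rewrite index_mem.
exists (Ordinal hi) => /=.
by rewrite /Mj nth_index.
Qed.

Lemma emb_cV p : (forall m, m \notin M -> p@_m = 0) -> emb (cV p) = p.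
Proof.
move=> H; apply/mpolyP => m.
case: (boolP (m \in M)) => hm; last by rewrite emb_out // H.
have [j ->] := in_M hm.
by have := cV_emb (cV p); move/rowP => /(_ j); rewrite !mxE.
Qed.

Definition pC p := p - emb (cV p).

Lemma pC_in p m : m \in M -> (pC p)@_m = 0.
Proof.
move=> hm; have [j ->] := in_M hm.
rewrite /pC mcoeffB.
have := cV_emb (cV p); move/rowP => /(_ j); rewrite !mxE => ->.
by rewrite subrr.
Qed.

Lemma pC_out p m : m \notin M -> (pC p)@_m = p@_m.
Proof. by move=> hm; rewrite /pC mcoeffB emb_out // subr0. Qed.

Lemma decomp p : p = emb (cV p) + pC p.
Proof. by rewrite /pC addrC subrK. Qed.

Lemma cV_pC p : cV (pC p) = 0.
Proof.
by apply/rowP => j; rewrite !mxE pC_in // /Mj mem_nth.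
Qed.

Section Basis.
Variables (d : nat) (B : 'M[K]_(d, k)).
Definition sB : seq Pn := map (fun i => emb (row i B)) (enum 'I_d).

Lemma size_sB : size sB = d.
Proof. by rewrite size_map size_enum_ord. Qed.

Lemma sum_sB (c : seq K) :
  \sum_(i < size sB) c`_i *: sB`_i = emb ((\row_(i < d) c`_i) *m B).
Proof.
rewrite mulmx_sum_row emb_sum size_sB; apply: eq_bigr => i _.
rewrite mxE embZ; congr (_ *: _).
rewrite (nth_map i); last by rewrite size_enum_ord.
by rewrite nth_ord_enum.
Qed.

Lemma row_seq (w : 'rV[K]_d) : exists c : seq K, \row_(i < d) c`_i = w.
Proof.
exists (map (fun i => w 0 i) (enum 'I_d)); apply/rowP => i; rewrite mxE.
by rewrite (nth_map i) ?size_enum_ord // nth_ord_enum.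
Qed.

Lemma mem_sB v : v \in sB -> exists i, v = emb (row i B).
Proof. by case/mapP => i _ ->; exists i. Qed.
End Basis.


Section Core.
Variable g : Pn -> Pn.
Hypothesis lg : lin_map g.
Hypothesis g0 : forall p, (forall m, m \in M -> p@_m = 0) -> g p = 0.
Hypothesis gS : forall p m, m \notin M -> (g p)@_m = 0.

Definition phi p := p + g p.

Lemma lin_phi : lin_map phi.
Proof.
move=> a u v; rewrite /phi lg scalerDr.
by rewrite -!addrA; congr (_ + _); rewrite addrCA.
Qed.

Definition Am : 'M[K]_k := \matrix_(i, j) (phi 'X_[Mj i])@_(Mj j).

Lemma phi_out p m : m \notin M -> (phi p)@_m = p@_m.
Proof. by move=> hm; rewrite /phi mcoeffD gS // addr0. Qed.

Lemma phi_emb r : phi (emb r) = emb (r *m Am).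
Proof.
have E : phi (emb r) = emb (cV (phi (emb r))).
  by rewrite emb_cV // => m hm; rewrite phi_out // emb_out.
rewrite {1}E; congr emb; apply/rowP => j; rewrite !mxE.
rewrite /emb lin_sum; last exact: lin_phi.
rewrite raddf_sum /=; apply: eq_bigr => i _.
by rewrite (linZ lin_phi) mcoeffZ mxE.
Qed.

Lemma phi_pC p : phi (pC p) = pC p.
Proof. by rewrite /phi g0 ?addr0 // => m; exact: pC_in. Qed.

Lemma phi_dec p : phi p = emb (cV p *m Am) + pC p.
Proof. by rewrite {1}(decomp p) (linD lin_phi) phi_emb phi_pC. Qed.

Lemma cV_phi p : cV (phi p) = cV p *m Am.
Proof. by rewrite phi_dec cVD cV_emb cV_pC addr0. Qed.

Lemma phi_C0 : C0 phi.
Proof.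
split; first exact: lin_phi.
exists (\rank (kermx Am)); split.
- exists (sB (row_base (kermx Am))); split; first exact: size_sB.
  split.
  + move=> v /mem_sB [i ->]; rewrite phi_emb.
    have : (row i (row_base (kermx Am)) <= kermx Am)%MS.
      by rewrite (submx_trans (row_sub _ _)) // eq_row_base.
    by move/sub_kermxP => ->; exact: emb0.
  + move=> c; rewrite sum_sB => /(congr1 cV); rewrite cV_emb.
    have -> : cV 0 = 0 by apply/rowP => j; rewrite !mxE mcoeff0.
    rewrite -(mul0mx _ (row_base (kermx Am))) => /row_free_inj.
    move=> /(_ (row_base_free _)) /rowP H i hi.
    rewrite size_sB in hi; by have := H (Ordinal hi); rewrite !mxE.
  + move=> v hv.
    have hvM : forall m, m \notin M -> v@_m = 0.
      by move=> m hm; rewrite -(phi_out v hm) hv mcoeff0.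
    have hk : (cV v <= kermx Am)%MS.
      apply/sub_kermxP; rewrite -cV_phi hv.
      by apply/rowP => j; rewrite !mxE mcoeff0.
    have : (cV v <= row_base (kermx Am))%MS by rewrite eq_row_base.
    case/submxP => w ew.
    have [c ec] := row_seq w.
    exists c, 0; split => //; rewrite add0r sum_sB ec -ew.
    by rewrite emb_cV.
- exists (sB (row_base (Am^C)%MS)); split.
    by rewrite size_sB mxrank_ker mxrank_compl.
  split.
  + by [].
  + move=> c; rewrite sum_sB; case=> q /(congr1 cV); rewrite cV_emb cV_phi => E.
    have h0 : ((\row_(i < _) c`_i) *m row_base (Am^C)%MS <= (Am :&: Am^C))%MS.
      rewrite sub_capmx E submxMl -E /=.
      by rewrite (submx_trans (submxMl _ _)) // eq_row_base.
    move: h0; rewrite capmx_compl submx0 => /eqP.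
    rewrite -(mul0mx _ (row_base (Am^C)%MS)) => /row_free_inj.
    move=> /(_ (row_base_free _)) /rowP H i hi.
    rewrite size_sB in hi; by have := H (Ordinal hi); rewrite !mxE.
  + move=> v _.
    have : (cV v <= Am + Am^C)%MS.
      by rewrite (submx_trans (submx1 _)) // sub1mx addsmx_compl_full.
    case/sub_addsmxP => [[u1 u2]] /= ev.
    have : (u2 *m Am^C <= row_base (Am^C))%MS by rewrite eq_row_base submxMl.
    case/submxP => w ew.
    have [c ec] := row_seq w.
    exists c, (phi (emb u1 + pC v)); split; first by exists (emb u1 + pC v).
    rewrite sum_sB ec -ew (linD lin_phi) phi_emb phi_pC.
    rewrite addrAC -embD -ev.
    exact: decomp.
Qed.

End Core.

End S2.

From Stdlib Require Import FunctionalExtensionality.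

Lemma sum0_In (T : Type) (V : zmodType) (s : seq T) (F : T -> V) :
  (forall t, List.In t s -> F t = 0) -> \sum_(t <- s) F t = 0.
Proof.
elim: s => [|a s IH] H; first by rewrite big_nil.
rewrite big_cons H /= ?add0r; last by left.
by apply: IH => t ts; apply: H; right.
Qed.

Lemma map_In (T : Type) (U : eqType) (g : T -> U) (s : seq T) t :
  List.In t s -> g t \in map g s.
Proof.
elim: s => [|a s IH] //= [->|ts]; rewrite in_cons ?eqxx //.
by rewrite IH ?orbT.
Qed.

Section S3.
Variables (K : fieldType) (n : nat).
Local Notation Pn := (Pn K n).
Implicit Types (p q : Pn) (m : 'X_{1..n}) (f : Pn -> Pn).

Lemma FT_C0 (g : Pn -> Pn) (M : seq 'X_{1..n}) : lin_map g ->
  (forall p, (forall m, m \in M -> p@_m = 0) -> g p = 0) ->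
  (forall p m, m \notin M -> (g p)@_m = 0) -> C0 (fun p => p + g p).
Proof.
move=> lg g0 gS.
apply: (@phi_C0 K n (undup M) (undup_uniq M) g lg).
- by move=> p H; apply: g0 => m hm; apply: H; rewrite mem_undup.
- by move=> p m; rewrite mem_undup; exact: gS.
Qed.

Lemma Sn_lin (u : Pn -> Pn) : Sn u -> lin_map u.
Proof.
elim => {u}.
- by [].
- exact: lin_opX.
- exact: lin_opY.
- move=> f g _ Hf _ Hg a x y; rewrite Hf Hg scalerDr.
  by rewrite -!addrA; congr (_ + _); rewrite addrCA.
- by move=> a f _ Hf b x y; rewrite Hf scalerDr !scalerA mulrC.
- by move=> f g _ Hf _ Hg; exact: lin_comp.
- by move=> f g _ Hf e a x y; rewrite -!e.
Qed.

Lemma Fn_expr f : Fn f -> exists s : seq (K * ('I_n -> nat) * ('I_n -> nat)),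
  forall p, f p = \sum_(t <- s) (t.1.1 * p@_(mk t.2)) *: 'X_[mk t.1.2].
Proof.
case=> s Hs; exists s => p; rewrite Hs; apply: eq_bigr => t _.
by rewrite FgenE scalerA.
Qed.

Lemma Fn_lin f : Fn f -> lin_map f.
Proof.
case/Fn_expr => s Hs a u v; rewrite !Hs scaler_sumr -big_split /=.
apply: eq_bigr => t _; rewrite mcoeffD mcoeffZ mulrDr scalerDl scalerA.
by rewrite mulrCA.
Qed.

Lemma C0_comp (u v phi : Pn -> Pn) : lin_map u -> lin_map v ->
  (forall p, u (v p) = p) -> (forall p, v (u p) = p) ->
  C0 phi -> C0 (fun p => u (phi p)).
Proof.
move=> lu lv uv vu [lphi [d [[s1 [e1 [a1 b1 c1]]] [s2 [e2 [a2 b2 c2]]]]]].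
split; first exact: lin_comp.
exists d; split.
- exists s1; split => //; split => //.
  + by move=> x /a1 ->; exact: lin0.
  + move=> x hx; apply: c1; by rewrite -[phi x]vu hx lin0.
- exists (map u s2); split; first by rewrite size_map.
  have nthu (c : seq K) : \sum_(i < size (map u s2)) c`_i *: (map u s2)`_i
      = u (\sum_(i < size s2) c`_i *: s2`_i).
    rewrite lin_sum //; rewrite size_map; apply: eq_bigr => i _.
    by rewrite (linZ lu) (nth_map 0).
  split => //.
  + move=> c; rewrite nthu size_map; case=> q E; apply: b2; exists q.
    by rewrite -[LHS]vu E vu.
  + move=> x _; have [c [w [[q ->] E]]] := c2 (v x) I.
    exists c, (u (phi q)); split; first by exists q.
    by rewrite nthu -(linD lu) -E uv.
Qed.

End S3.

Unset Implicit Arguments.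
Theorem corollary3p5 (K : fieldType) (n : nat) :
  [pchar K] =i pred0 -> (1 <= n)%N ->
  (forall f, Fn f -> C0 (fun p : Pn K n => p + f p)) /\
  (forall u f, Sn_unit u -> Fn f -> C0 (fun p : Pn K n => u p + f p)).
Proof.
move=> _ _; split.
  move=> f Hf; have lf := Fn_lin Hf; have [s Hs] := Fn_expr Hf.
  apply: (@FT_C0 K n f (map (fun t => mk t.2) s ++ map (fun t => mk t.1.2) s)) => //.
  - move=> p H; rewrite Hs; apply: sum0_In => t ts.
    rewrite H ?mulr0 ?scale0r //; by rewrite mem_cat (map_In (fun t => mk t.2)).
  - move=> p m hm; rewrite Hs raddf_sum; apply: sum0_In => t ts.
    rewrite /= mcoeffZ mcoeffX; case: eqP => [e|_]; last by rewrite mulr0.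
    by move: hm; rewrite -e mem_cat (map_In (fun t => mk t.1.2)) ?orbT.
move=> u f [Su [v [Sv [uv vu]]]] Hf.
have lu := Sn_lin Su; have lv := Sn_lin Sv.
have lf := Fn_lin Hf; have [s Hs] := Fn_expr Hf.
have E : (fun p : Pn K n => u p + f p) = (fun p => u (p + v (f p))).
  by apply: functional_extensionality => p; rewrite (linD lu) uv.
rewrite E; apply: (C0_comp lu lv uv vu).
have vf p : v (f p) = \sum_(t <- s) (t.1.1 * p@_(mk t.2)) *: v 'X_[mk t.1.2].
  rewrite Hs lin_sum //; apply: eq_bigr => t _; exact: linZ.
apply: (@FT_C0 K n (fun p => v (f p))
  (map (fun t => mk t.2) s ++ flatten [seq msupp (v 'X_[mk t.1.2]) | t <- s])).
- exact: lin_comp.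
- move=> p H; rewrite vf; apply: sum0_In => t ts.
  rewrite H ?mulr0 ?scale0r //; by rewrite mem_cat (map_In (fun t => mk t.2)).
- move=> p m hm; rewrite vf raddf_sum; apply: sum0_In => t ts.
  have hm' : m \notin msupp (v 'X_[mk t.1.2]).
    move: hm; apply: contra => hm.
    rewrite mem_cat; apply/orP; right; apply/flattenP.
    by exists (msupp (v 'X_[mk t.1.2])) => //; apply: (map_In (fun t => msupp (v 'X_[mk t.1.2]))).
  by rewrite /= mcoeffZ (memN_msupp_eq0 hm') mulr0.
Qed.
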